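(* Consider the static single-object erasure-coded Byzantine read/write protocol described in the context over a set $C$ of flexnodes, at most $b<\frac{|C|-k}{3}$ of which are Byzantine. In any execution, if $\pi$ is a complete get-data primitive on $C$ that returns $\langle t_\pi,v_\pi\rangle$, then either $\langle t_\pi,v_\pi\rangle=\langle t_0,v_0\rangle$, or there exists a put-data$(\langle t_\pi,v_\pi\rangle)$ primitive $\phi$ on $C$ in the execution such that $\pi$ did not complete before the invocation of $\phi$.
   Context: Model. $C$ is a fixed finite set of processes (''flexnodes'') over asynchronous reliable channels. Up to $b$ flexnodes may be Byzantine. Processes invoking reads/writes follow the protocol but may crash. Signatures are unforgeable: only $p$ can produce a valid signature of $p$, so Byzantine flexnodes cannot forge signed pairs. An $[n,k]$ RLNC code with $n=|C|$: $\mathrm{Encode}(v)$ produces $|C|$ coded elements, any $k$ of which (from the same encoding) recover $v$. Tags are pairs $(z,w)$, $z\in\mathbb{N}$, $w$ a writer identifier, ordered lexicographically; $\langle t_0,v_0\rangle$ is the initial tag-value pair. A parameter $\delta\ge1$ is fixed. A quorum is any subset of $C$ of size $\lceil (2|C|+k)/3\rceil$. State. Each flexnode keeps a set $List$ of signed triples $(\langle t,e\rangle,\sigma)$, initially holding only the initial pair with tag $t_0$. Primitives (by flexnode $p$): put-data$(\langle t,v\rangle)$: encode $v$ into $e_1,\dots,e_{|C|}$, send $\langle t,e_j\rangle$ signed by $p$ to the $j$-th flexnode; a receiver adds it to $List$ if the signature verifies and no entry with tag $t$ exists, then if $|List|>\delta+1$ removes the entries with minimum tag, and acknowledges; $p$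 waits for a quorum of acknowledgements. get-data: query all, each replies with its $List$, wait for a quorum, keep the pairs with valid signatures, take the maximum tag appearing in at least $k$ received lists, decode the value from its coded elements and return the pair; if no such tag exists the primitive does not complete. (get-tag: query all, each replies with its signed max-tag entry, wait for a quorum, return the maximum verified tag.) Operations: read = get-data then put-data of the obtained pair; write$(v)$ by $w$ = get-tag returning $t$, then put-data$(\langle (t.z+1,w),v\rangle)$. *)

(* Defs.v *)
(* A model of the static single-object erasure-coded
   Byzantine read/write protocol as a transition system over global states;
   executions are finite sequences of steps from the initial state, recorded
   as traces of primitive invocation/response events. *)
From mathcomp Require Import all_boot.
Set Implicit Arguments. Unset Strict Implicit. Unset Printing Implicit Defensive.

(* Tags (z, w): z a natural number, w a writer identifier (processes that
   invoke operations are identified by natural numbers).  Lexicographic order. *)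
Definition tag := (nat * nat)%type.
Definition tag_lt (t1 t2 : tag) : bool :=
  (t1.1 < t2.1) || ((t1.1 == t2.1) && (t1.2 < t2.2)).
Definition tag_le (t1 t2 : tag) : bool := (t1 == t2) || tag_lt t1 t2.
Definition t0 : tag := (0, 0).

(* The signer of a signed pair: [Some c] = process c, [None] = the set-up
   signature of the initial pair. *)
Definition signer := option nat.

Section Protocol.
Variables (node : finType) (V E : eqType).
(* Encode v = [enc v j | j in C] ;  dec = the decoder of the code. *)
Variables (enc : V -> node -> E) (dec : seq E -> option V).

Definition rlnc_code (k : nat) : Prop :=
  [/\ 0 < k <= #|node|,
      (forall v (S : seq node), uniq S -> size S = k ->
          dec [seq enc v j | j <- S] = Some v) &
      (forall v (s : seq E) u, all (fun e => [exists j, e == enc v j]) s ->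
          dec s = Some u -> u = v)].

Variables (k delta : nat) (v0 : V) (Byz : {set node}).

(* quorum size ceil((2|C| + k)/3) *)
Definition qsize : nat := (2 * #|node| + k + 2) %/ 3.

Definition entry := (tag * E * signer)%type.
Definition etag (x : entry) : tag := x.1.1.
Definition eelt (x : entry) : E := x.1.2.

(* messages; the two nat fields are (client, primitive instance number) *)
Inductive msg :=
| MQueryTag of nat & nat
| MQueryData of nat & nat
| MPut of nat & nat & entry
| MTagReply of nat & nat & option entry   (* None = reply with invalid signature *)
| MDataReply of nat & nat & seq entry
| MAck of nat & nat.

Definition reply_to (m : msg) : option nat :=
  match m with
  | MTagReply c _ _ | MDataReply c _ _ | MAck c _ => Some c
  | _ => None
  end.

Inductive cstate :=
| Idle
| WGetTag of nat & V & seq (node * option entry)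
| WPut of nat & seq node
| RGetData of nat & seq (node * seq entry)
| RPut of nat & seq node.

(* primitive events: (client, instance, ...) *)
Inductive event :=
| InvGetTag of nat & nat
| RespGetTag of nat & nat & tag
| InvGetData of nat & nat
| RespGetData of nat & nat & tag & V
| InvPutData of nat & nat & tag & V
| RespPutData of nat & nat.

Record gstate := GState {
  lists : node -> seq entry;      (* List of each (honest) flexnode *)
  cst : nat -> cstate;
  cnt : nat -> nat;               (* fresh primitive-instance counters *)
  toNode : seq (node * msg);      (* in transit to flexnode (destination) *)
  toClient : seq (node * msg);    (* in transit to a process (source node) *)
  produced : seq entry            (* all signed pairs ever produced *)
}.

Definition upd {A : Type} (f : nat -> A) (c : nat) (a : A) : nat -> A :=
  fun c' => if c' == c then a else f c'.
Definition updn {A : Type} (f : node -> A) (j : node) (a : A) : node -> A :=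
  fun j' => if j' == j then a else f j'.

Fixpoint mintag (t : tag) (L : seq entry) : tag :=
  match L with
  | [::] => t
  | x :: L' => mintag (if tag_lt (etag x) t then etag x else t) L'
  end.

Definition insert_entry (L : seq entry) (x : entry) : seq entry :=
  if has (fun y => etag y == etag x) L then L
  else if delta.+1 < size (x :: L)
       then [seq y <- x :: L | etag y != mintag (etag x) (x :: L)]
       else x :: L.

Inductive node_handle (L : seq entry) (j : node) :
    msg -> seq entry -> seq (node * msg) -> Prop :=
| NHQueryTag c n x : x \in L -> (forall y, y \in L -> tag_le (etag y) (etag x)) ->
    node_handle L j (MQueryTag c n) L [:: (j, MTagReply c n (Some x))]
| NHQueryData c n :
    node_handle L j (MQueryData c n) L [:: (j, MDataReply c n L)]
| NHPut c n x :
    node_handle L j (MPut c n x) (insert_entry L x) [:: (j, MAck c n)].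

Definition recv (cs : cstate) (j : node) (m : msg) : option cstate :=
  match cs, m with
  | WGetTag n v R, MTagReply _ n' r =>
      if [&& n == n', j \notin map fst R & size R < qsize]
      then Some (WGetTag n v (rcons R (j, r))) else None
  | RGetData n R, MDataReply _ n' L =>
      if [&& n == n', j \notin map fst R & size R < qsize]
      then Some (RGetData n (rcons R (j, L))) else None
  | WPut n A, MAck _ n' =>
      if [&& n == n', j \notin A & size A < qsize]
      then Some (WPut n (rcons A j)) else None
  | RPut n A, MAck _ n' =>
      if [&& n == n', j \notin A & size A < qsize]
      then Some (RPut n (rcons A j)) else None
  | _, _ => None
  end.

(* messages a Byzantine flexnode can send to a process: signatures cannot be
   forged, so every validly signed pair in it was produced (entries with invalid
   signatures are discarded by the receiver and are hence omitted, except that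
   an invalid get-tag reply still counts towards the quorum) *)
Definition byz_ok (P : seq entry) (m : msg) : bool :=
  match m with
  | MTagReply _ _ r => if r is Some x then x \in P else true
  | MDataReply _ _ L => all (fun x => x \in P) L
  | MAck _ _ => true
  | _ => false
  end.

Definition nlists (R : seq (node * seq entry)) (t : tag) : nat :=
  count (fun p => has (fun x => etag x == t) p.2) R.
Definition elems (R : seq (node * seq entry)) (t : tag) : seq E :=
  flatten [seq [seq eelt x | x <- p.2 & etag x == t] | p <- R].

Definition put_msgs (c n : nat) (t : tag) (v : V) : seq (node * msg) :=
  [seq (j, MPut c n (t, enc v j, Some c)) | j <- enum node].
Definition put_sigs (c : nat) (t : tag) (v : V) : seq entry :=
  [seq (t, enc v j, Some c) | j <- enum node].

Inductive step : gstate -> seq event -> gstate -> Prop :=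
| StWriteInv s c v n :
    cst s c = Idle -> n = cnt s c ->
    step s [:: InvGetTag c n]
      (GState (lists s) (upd (cst s) c (WGetTag n v [::])) (upd (cnt s) c n.+1)
              (toNode s ++ [seq (j, MQueryTag c n) | j <- enum node])
              (toClient s) (produced s))
| StGetTagResp s c n v R t n' :
    cst s c = WGetTag n v R -> size R = qsize ->
    t \in [seq etag x | x <- pmap snd R] ->
    (forall t', t' \in [seq etag x | x <- pmap snd R] -> tag_le t' t) ->
    n' = cnt s c ->
    step s [:: RespGetTag c n t; InvPutData c n' (t.1.+1, c) v]
      (GState (lists s) (upd (cst s) c (WPut n' [::])) (upd (cnt s) c n'.+1)
              (toNode s ++ put_msgs c n' (t.1.+1, c) v) (toClient s)
              (produced s ++ put_sigs c (t.1.+1, c) v))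
| StReadInv s c n :
    cst s c = Idle -> n = cnt s c ->
    step s [:: InvGetData c n]
      (GState (lists s) (upd (cst s) c (RGetData n [::])) (upd (cnt s) c n.+1)
              (toNode s ++ [seq (j, MQueryData c n) | j <- enum node])
              (toClient s) (produced s))
| StGetDataResp s c n R t v n' :
    cst s c = RGetData n R -> size R = qsize ->
    k <= nlists R t -> (forall t', k <= nlists R t' -> tag_le t' t) ->
    dec (elems R t) = Some v ->
    n' = cnt s c ->
    step s [:: RespGetData c n t v; InvPutData c n' t v]
      (GState (lists s) (upd (cst s) c (RPut n' [::])) (upd (cnt s) c n'.+1)
              (toNode s ++ put_msgs c n' t v) (toClient s)
              (produced s ++ put_sigs c t v))
| StPutResp s c n A :
    (cst s c = WPut n A \/ cst s c = RPut n A) -> size A = qsize ->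
    step s [:: RespPutData c n]
      (GState (lists s) (upd (cst s) c Idle) (cnt s) (toNode s) (toClient s)
              (produced s))
| StRecv s c j m l1 l2 cs' :
    toClient s = l1 ++ (j, m) :: l2 -> reply_to m = Some c ->
    recv (cst s c) j m = Some cs' ->
    step s [::]
      (GState (lists s) (upd (cst s) c cs') (cnt s) (toNode s) (l1 ++ l2)
              (produced s))
| StByzRecv s c j m cs' :
    j \in Byz -> byz_ok (produced s) m -> reply_to m = Some c ->
    recv (cst s c) j m = Some cs' ->
    step s [::]
      (GState (lists s) (upd (cst s) c cs') (cnt s) (toNode s) (toClient s)
              (produced s))
| StNode s j m l1 l2 L' out :
    j \notin Byz -> toNode s = l1 ++ (j, m) :: l2 ->
    node_handle (lists s j) j m L' out ->
    step s [::]
      (GState (updn (lists s) j L') (cst s) (cnt s) (l1 ++ l2) (toClient s ++ out)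
              (produced s))
(* a Byzantine flexnode sends a put-data message (with a validly signed,
   hence previously produced, pair) to an honest flexnode *)
| StByzPut s j j' x :
    j \notin Byz -> j' \in Byz -> x \in produced s ->
    step s [::]
      (GState (updn (lists s) j (insert_entry (lists s j) x)) (cst s) (cnt s)
              (toNode s) (toClient s) (produced s)).

Definition init : gstate :=
  GState (fun j => [:: (t0, enc v0 j, None)]) (fun _ => Idle) (fun _ => 0)
         [::] [::] [seq (t0, enc v0 j, None) | j <- enum node].

Inductive reach : gstate -> seq event -> Prop :=
| Reach0 : reach init [::]
| ReachS s tr evs s' : reach s tr -> step s evs s' -> reach s' (tr ++ evs).

End Protocol.

(* Main.v *)
Require Import Defs.
From mathcomp Require Import all_boot zify.
From Stdlib Require Import FunctionalExtensionality PropExtensionality.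
Import Defs.
Set Implicit Arguments. Unset Strict Implicit. Unset Printing Implicit Defensive.

Lemma tle_refl a : tag_le a a.
Proof. by rewrite /tag_le eqxx. Qed.
Lemma tle_trans a b c : tag_le a b -> tag_le b c -> tag_le a c.
Proof. case: a => a1 a2; case: b => b1 b2; case: c => c1 c2; rewrite /tag_le /tag_lt /= !xpair_eqE. lia. Qed.
Lemma tle_total a b : tag_le a b || tag_le b a.
Proof. case: a => a1 a2; case: b => b1 b2; rewrite /tag_le /tag_lt /= !xpair_eqE. lia. Qed.
Lemma tle_anti a b : tag_le a b -> tag_le b a -> a = b.
Proof. case: a => a1 a2; case: b => b1 b2; rewrite /tag_le /tag_lt /= !xpair_eqE.
move=> H1 H2. have [-> ->] : a1 = b1 /\ a2 = b2 by lia. by []. Qed.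
Lemma tlt_le a b : tag_lt a b -> tag_le a b.
Proof. by rewrite /tag_le => ->; rewrite orbT. Qed.
Lemma ntlt_le a b : ~~ tag_lt a b -> tag_le b a.
Proof. case: a => a1 a2; case: b => b1 b2; rewrite /tag_le /tag_lt /= !xpair_eqE. lia. Qed.

Section S.
Variable E : eqType.

Lemma mintag_le t (L : seq (entry E)) :
  tag_le (mintag t L) t /\ forall y, y \in L -> tag_le (mintag t L) (etag y).
Proof.
elim: L t => [|x L IH] t /=; first by split=> //; apply: tle_refl.
set t' := (if tag_lt (etag x) t then etag x else t).
have [H1 H2] := IH t'.
have Ht1 : tag_le t' t by rewrite /t'; case: ifP => h; [apply: tlt_le | rewrite tle_refl].
have Ht2 : tag_le t' (etag x) by rewrite /t'; case: ifP => h; [rewrite tle_refl | apply: ntlt_le; rewrite h].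
split; first exact: tle_trans H1 Ht1.
move=> y; rewrite inE => /orP [/eqP -> | yL]; [exact: tle_trans H1 Ht2 | exact: H2].
Qed.

Lemma max_ex (s : seq (entry E)) x : x \in s ->
  exists2 m, m \in s & forall y, y \in s -> tag_le (etag y) (etag m).
Proof.
elim: s x => [//|a s IH] x _.
case: s IH => [|b s] IH.
  exists a; first by rewrite inE eqxx.
  by move=> y; rewrite inE => /eqP ->; apply: tle_refl.
have [m mIn mMax] := IH b (mem_head _ _).
case/orP: (tle_total (etag a) (etag m)) => h.
  exists m; first by rewrite inE mIn orbT.
  by move=> y; rewrite inE => /orP [/eqP -> //| /mMax].
exists a; first by rewrite inE eqxx.
move=> y; rewrite inE => /orP [/eqP -> | /mMax h2]; first exact: tle_refl.
exact: tle_trans h2 h.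
Qed.

Variable delta : nat.

Lemma ins_sub (L : seq (entry E)) x y : y \in insert_entry delta L x -> y \in x :: L.
Proof.
rewrite /insert_entry; case: ifP => _; first by rewrite inE => ->; rewrite orbT.
case: ifP => _ //. by rewrite mem_filter => /andP [].
Qed.

Lemma ins_mono (L : seq (entry E)) x y : y \in x :: L ->
  exists2 y', y' \in insert_entry delta L x & tag_le (etag y) (etag y').
Proof.
move=> Hy; rewrite /insert_entry; case: ifP => Hhas.
  move: Hy; rewrite inE => /orP [/eqP -> | yL]; last by exists y => //; apply: tle_refl.
  move/hasP: Hhas => [z zL /eqP ez]; exists z => //; rewrite ez; apply: tle_refl.
case: ifP => Hsz; last by exists y => //; apply: tle_refl.
have [m mIn mMax] := max_ex Hy.
have [Hm1 Hm2] := mintag_le (etag x) (x :: L).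
case Em: (etag m != mintag (etag x) (x :: L)).
  exists m; first by rewrite mem_filter Em.
  exact: mMax.
move/negbFE/eqP: Em => Em.
case: L Hy Hhas Hsz mIn mMax Hm1 Hm2 Em => [|z L] Hy Hhas Hsz mIn mMax Hm1 Hm2 Em.
  by move: Hsz => /=; lia.
exfalso; move/negP: Hhas; apply; apply/hasP; exists z; first exact: mem_head.
have ez : etag z = etag m.
  apply: tle_anti; first by apply: mMax; rewrite !inE eqxx orbT.
  by rewrite Em; apply: Hm2; rewrite !inE eqxx orbT.
have ex : etag x = etag m.
  apply: tle_anti; first by apply: mMax; rewrite !inE eqxx.
  by rewrite Em; apply: Hm2; rewrite !inE eqxx.
by rewrite ez ex.
Qed.

End S.

Lemma In_cat (A : Type) (x : A) (a b : seq A) : List.In x (a ++ b) <-> List.In x a \/ List.In x b.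
Proof. elim: a => [|y a IH] /=; [tauto | move: IH; tauto]. Qed.

Lemma In_split' (A : Type) (x : A) (l : seq A) : List.In x l -> exists l1 l2, l = l1 ++ x :: l2.
Proof.
elim: l => [//|y l IH] /= [-> | /IH [l1 [l2 ->]]]; first by exists [::], l.
by exists (y :: l1), l2.
Qed.

Lemma split_app (A : Type) (tr evs pre post : seq A) e :
  tr ++ evs = pre ++ e :: post ->
  (exists post', tr = pre ++ e :: post') \/ (exists evs1, evs = evs1 ++ e :: post /\ pre = tr ++ evs1).
Proof.
elim: tr pre => [|a tr IH] pre /=; first by move=> ->; right; exists pre.
case: pre => [|b pre] /= [<- H].
  by left; exists tr.
case: (IH _ H) => [[p ->] | [e1 [-> ->]]]; first by left; exists p.
by right; exists e1.
Qed.

Lemma In_map' (A B : Type) (f : A -> B) (l : seq A) y : List.In y (map f l) -> exists x, y = f x.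
Proof. elim: l => [//|a l IH] /= [<-|/IH //]; by exists a. Qed.

Lemma In_del (A : Type) (x y : A) l1 l2 : List.In x (l1 ++ l2) -> List.In x (l1 ++ y :: l2).
Proof. move/In_cat => [h|h]; apply/In_cat; [by left | by right; right]. Qed.

Lemma upd_cnt (f : nat -> nat) c x : f x <= upd f c (f c).+1 x.
Proof. by rewrite /upd; case: eqP => [->|]. Qed.

Section P.
Variables (node : finType) (V E : eqType) (enc : V -> node -> E) (dec : seq E -> option V).
Variables (k delta b : nat) (v0 : V) (Byz : {set node}).
Hypotheses (Hcode : rlnc_code enc dec k) (Hdelta : 1 <= delta) (HB : #|Byz| <= b)
  (Hb : 3 * b < #|node| - k).

Local Notation qs := (qsize node k).
Local Notation gst := (gstate node V E).

Lemma kpos : 0 < k <= #|node|. Proof. by case: Hcode. Qed.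

Lemma quorum_inter (A B : seq node) : uniq A -> uniq B -> size A = qs -> size B = qs ->
  exists j, [/\ j \in A, j \in B & j \notin Byz].
Proof.
move=> uA uB sA sB.
have cA : #|[set j in A]| = size A by rewrite cardsE; apply/card_uniqP.
have cB : #|[set j in B]| = size B by rewrite cardsE; apply/card_uniqP.
have h1 := cardsUI [set j in A] [set j in B].
have h2 : #|[set j in A] :|: [set j in B]| <= #|node| := max_card _.
have h3 := cardsID Byz ([set j in A] :&: [set j in B]).
have h4 : #|[set j in A] :&: [set j in B] :&: Byz| <= #|Byz| := subset_leq_card (subsetIr _ _).
have kn := kpos.
have : 0 < #|[set j in A] :&: [set j in B] :\: Byz|.
  move: sA sB cA cB h1 h2 h3 h4 HB Hb kn; rewrite /qsize; lia.
case/card_gt0P => j; rewrite !inE => /andP [jB /andP [jA jB']].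
by exists j.
Qed.

Definition origin (tr : seq (event V)) (t : tag) (v : V) : Prop :=
  (t, v) = (t0, v0) \/ exists c n, List.In (InvPutData c n t v) tr.

Lemma origin_mono tr evs t v : origin tr t v -> origin (tr ++ evs) t v.
Proof. case=> [h|[c [n h]]]; [by left | right; exists c, n; apply/In_cat; left; exact: h]. Qed.

Lemma origin_eq1 tr e : (forall c n t v, e <> InvPutData c n t v) -> origin (tr ++ [:: e]) = origin tr.
Proof.
move=> He; apply: functional_extensionality => t; apply: functional_extensionality => v.
apply: propositional_extensionality; split; last exact: origin_mono.
case=> [h|[c [n /In_cat [h|[h|//]]]]]; [by left | by right; exists c, n | by case: (He c n t v)].
Qed.

Lemma origin_new tr e1 c n tw v t' v' : (forall c n t v, e1 <> InvPutData c n t v) ->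
  origin (tr ++ [:: e1; InvPutData c n tw v]) t' v' -> origin tr t' v' \/ (t' = tw /\ v' = v).
Proof.
move=> He; case=> [h|[c' [n' /In_cat [h|[h|[h|//]]]]]]; [by left; left | by left; right; exists c', n' | |].
  by case: (He c' n' t' v').
by case: h => _ _ -> ->; right.
Qed.

Lemma origin_eq2 tr e1 c n t v : (forall c n t v, e1 <> InvPutData c n t v) -> origin tr t v ->
  origin (tr ++ [:: e1; InvPutData c n t v]) = origin tr.
Proof.
move=> He Ho; apply: functional_extensionality => t'; apply: functional_extensionality => v'.
apply: propositional_extensionality; split; last exact: origin_mono.
by case/(origin_new He) => // [[-> ->]].
Qed.

Definition mid (m : msg E) : nat * nat :=
  match m with
  | MQueryTag c n | MQueryData c n | MPut c n _ | MTagReply c n _ | MDataReply c n _ | MAck c n => (c, n)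
  end.

Definition covered (s : gst) (O : tag -> V -> Prop) c j :=
  forall z v, O (z, c) v -> exists2 y, y \in lists s j & tag_le (z, c) (etag y).
Definition good (O : tag -> V -> Prop) c (x : entry E) :=
  forall z v, O (z, c) v -> tag_le (z, c) (etag x).
Definition QOK (s : gst) O c (Q : seq node) :=
  [/\ uniq Q, size Q = qs & forall j, j \in Q -> j \notin Byz -> covered s O c j].

Definition CInv (s : gst) (O : tag -> V -> Prop) c : Prop :=
  match cst s c with
  | WGetTag n _ R => exists Q, [/\ QOK s O c Q, uniq (map fst R),
      (forall j r, (j, r) \in R -> j \in Q -> j \notin Byz -> exists2 x, r = Some x & good O c x) &
      (forall j r, List.In (j, MTagReply c n r) (toClient s) -> j \in Q -> j \notin Byz ->
          exists2 x, r = Some x & good O c x)]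
  | WPut n A => exists tw, [/\ (forall z v, O (z, c) v -> tag_le (z, c) tw), uniq A,
      (forall j, j \in A -> j \notin Byz -> covered s O c j),
      (forall j, List.In (j, MAck E c n) (toClient s) -> j \notin Byz -> covered s O c j) &
      (forall j x, List.In (j, MPut c n x) (toNode s) -> etag x = tw)]
  | _ => exists Q, QOK s O c Q
  end.

Record Inv (s : gst) (O : tag -> V -> Prop) : Prop := {
 i_prod : forall x, x \in produced s -> exists v j, eelt x = enc v j /\ O (etag x) v;
 i_uniq : forall t v1 v2, O t v1 -> O t v2 -> v1 = v2;
 i_lists : forall j x, x \in lists s j -> x \in produced s;
 i_put : forall j c n x, List.In (j, MPut c n x) (toNode s) -> x \in produced s;
 i_tagrep : forall j c n x, List.In (j, MTagReply c n (Some x)) (toClient s) -> x \in produced s;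
 i_datrep : forall j c n L x, List.In (j, MDataReply c n L) (toClient s) -> x \in L -> x \in produced s;
 i_rget : forall c n R p x, cst s c = RGetData V n R -> p \in R -> x \in p.2 -> x \in produced s;
 i_freshN : forall j m, List.In (j, m) (toNode s) -> (mid m).2 < cnt s (mid m).1;
 i_freshC : forall j m, List.In (j, m) (toClient s) -> (mid m).2 < cnt s (mid m).1;
 i_cl : forall c, CInv s O c }.

Definition lmono (s s' : gst) :=
  forall j y, y \in lists s j -> exists2 y', y' \in lists s' j & tag_le (etag y) (etag y').

Lemma covered_mono s s' O O' c j : covered s O c j -> lmono s s' ->
  (forall z v, O' (z, c) v -> O (z, c) v) -> covered s' O' c j.
Proof.
move=> Hc Hl HO z v /HO /Hc [y yL le]; have [y' y'L le'] := Hl _ _ yL.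
by exists y' => //; apply: tle_trans le le'.
Qed.

Lemma QOK_mono s s' O O' c Q : QOK s O c Q -> lmono s s' ->
  (forall z v, O' (z, c) v -> O (z, c) v) -> QOK s' O' c Q.
Proof.
case=> uQ sQ HQ Hl HO; split=> // j jQ jB; apply: covered_mono (HQ j jQ jB) Hl HO.
Qed.

Lemma CInv_mono s s' O O' c : CInv s O c -> cst s' c = cst s c -> lmono s s' ->
  (forall z v, O' (z, c) v -> O (z, c) v) ->
  (forall n j r, List.In (j, MTagReply c n r) (toClient s') -> List.In (j, MTagReply c n r) (toClient s) \/
      exists2 x, r = Some x & forall y, y \in lists s j -> tag_le (etag y) (etag x)) ->
  (forall n j, List.In (j, MAck E c n) (toClient s') -> List.In (j, MAck E c n) (toClient s) \/
      exists x, List.In (j, MPut c n x) (toNode s) /\ exists2 y', y' \in lists s' j & tag_le (etag x) (etag y')) ->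
  (forall n j x, List.In (j, MPut c n x) (toNode s') -> List.In (j, MPut c n x) (toNode s)) ->
  CInv s' O' c.
Proof.
rewrite /CInv => HC Hcst Hl HO Htag Hack Hput; rewrite Hcst.
have Hg : forall x, good O c x -> good O' c x by move=> x Hx z v /HO; apply: Hx.
move: HC; case: (cst s c) => [|n v R|n A|n R|n A].
- by case=> Q HQ; exists Q; apply: QOK_mono HQ Hl HO.
- case=> Q [HQ uR HR Hp]; exists Q; split => //.
  + exact: QOK_mono HQ Hl HO.
  + by move=> j r jr jQ jB; case: (HR j r jr jQ jB) => x -> /Hg; exists x.
  + move=> j r /Htag [h|[x -> hx]] jQ jB.
      by case: (Hp j r h jQ jB) => x -> /Hg; exists x.
    exists x => // z v' /HO Ho; case: HQ => _ _ /(_ j jQ jB) /(_ z v' Ho) [y yL le].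
    exact: tle_trans le (hx y yL).
- case=> tw [Htw uA HA Hak Hpt]; exists tw; split => //.
  + by move=> z v' /HO; apply: Htw.
  + by move=> j jA jB; apply: covered_mono (HA j jA jB) Hl HO.
  + move=> j /Hack [h|[x [hx [y' y'L le]]]] jB.
      by apply: covered_mono (Hak j h jB) Hl HO.
    move=> z v' /HO /Htw le2; exists y' => //; rewrite (Hpt _ _ hx) in le.
    exact: tle_trans le2 le.
  + by move=> j x /Hput; apply: Hpt.
- by case=> Q HQ; exists Q; apply: QOK_mono HQ Hl HO.
- by case=> Q HQ; exists Q; apply: QOK_mono HQ Hl HO.
Qed.

Lemma lmono_refl s s' : lists s' = lists s -> lmono s s'.
Proof. by move=> e j y yL; exists y; [rewrite e | apply: tle_refl]. Qed.

Lemma mem_put_sigs c t v j : (t, enc v j, Some c) \in put_sigs enc c t v.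
Proof. by apply/mapP; exists j => //; rewrite mem_enum. Qed.

Lemma put_sigsP x c t v : x \in put_sigs enc c t v -> exists j, x = (t, enc v j, Some c).
Proof. by case/mapP => j _ ->; exists j. Qed.

Lemma put_msgsP j m c n t v : List.In (j, m) (put_msgs enc c n t v) ->
  m = MPut c n (t, enc v j, Some c).
Proof. rewrite /put_msgs => H; have [j' e] := In_map' H; by case: e => -> ->. Qed.

Lemma query_msgsP (j : node) (m m0 : msg E) :
  List.In (j, m) [seq (j, m0) | j <- enum node] -> m = m0.
Proof. move=> H; have [j' e] := In_map' H; by case: e => _ ->. Qed.


Lemma recvP (cs : cstate node V E) j (m : msg E) cs' : recv k cs j m = Some cs' ->
  (exists n v R c0 r, [/\ cs = WGetTag n v R, m = MTagReply c0 n r, j \notin map fst R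
      & cs' = WGetTag n v (rcons R (j, r))]) \/
  (exists n R c0 L, [/\ cs = RGetData V n R, m = MDataReply c0 n L, j \notin map fst R
      & cs' = RGetData V n (rcons R (j, L))]) \/
  (exists n A c0, [/\ cs = @WPut node V E n A, m = MAck E c0 n, j \notin A
      & cs' = @WPut node V E n (rcons A j)]) \/
  (exists n A c0, [/\ cs = @RPut node V E n A, m = MAck E c0 n, j \notin A
      & cs' = @RPut node V E n (rcons A j)]).
Proof.
destruct cs, m => //=; case: ifP => // /and3P [/eqP <- h _] [<-].
- by left; do 5 eexists; split; eauto.
- by right; right; left; do 3 eexists; split; eauto.
- by right; left; do 4 eexists; split; eauto.
- by right; right; right; do 3 eexists; split; eauto.
Qed.



Lemma recv_cinv (s s' : gst) O c j m cs' : CInv s O c -> reply_to m = Some c ->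
  recv k (cst s c) j m = Some cs' -> cst s' c = cs' -> lists s' = lists s ->
  (forall x, List.In x (toClient s') -> List.In x (toClient s)) -> toNode s' = toNode s ->
  (j \notin Byz -> List.In (j, m) (toClient s)) -> CInv s' O c.
Proof.
move=> HC Hr Hrecv Hcs Hl Hsub Hn Hjm.
have Hlm : lmono s s' := lmono_refl Hl.
have HO : forall z v, O (z, c) v -> O (z, c) v by [].
rewrite /CInv Hcs; move: HC; rewrite /CInv.
case/recvP: Hrecv => [[n [v [R [c0 [r [e1 e2 e3 e4]]]]]]|[[n [R [c0 [L [e1 e2 e3 e4]]]]]|[[n [A [c0 [e1 e2 e3 e4]]]]|[n [A [c0 [e1 e2 e3 e4]]]]]]];
  rewrite e1 e4; have c0c : c0 = c by move: Hr; rewrite e2 => -[].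
- case=> Q [HQ uR HR Hp]; exists Q; split.
  + exact: QOK_mono HQ Hlm HO.
  + by rewrite map_rcons rcons_uniq e3 uR.
  + move=> j0 r0; rewrite mem_rcons inE => /orP [/eqP [-> ->] jQ jB|h]; last exact: HR.
    apply: (Hp _ _ _ jQ jB); rewrite -c0c -e2; exact: Hjm.
  + by move=> j0 r0 /Hsub; apply: Hp.
- by case=> Q HQ; exists Q; apply: QOK_mono HQ Hlm HO.
- case=> tw [Htw uA HA Hak Hpt]; exists tw; split => //.
  + by rewrite rcons_uniq e3 uA.
  + move=> j0; rewrite mem_rcons inE => /orP [/eqP -> jB|h jB].
      apply: covered_mono _ Hlm HO; apply: (Hak _ _ jB); rewrite -c0c -e2; exact: Hjm.
    exact: covered_mono (HA j0 h jB) Hlm HO.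
  + move=> j0 /Hsub h jB; exact: covered_mono (Hak j0 h jB) Hlm HO.
  + by move=> j0 x; rewrite Hn; apply: Hpt.
- by case=> Q HQ; exists Q; apply: QOK_mono HQ Hlm HO.
Qed.

Lemma getdata_ok s O c n R t v : Inv s O -> cst s c = RGetData V n R -> k <= nlists R t ->
  dec (elems R t) = Some v -> O t v.
Proof.
move=> I Hc Hn Hd.
have /andP [k0 _] := kpos.
have : has (fun p => has (fun x => etag x == t) p.2) R by rewrite has_count; exact: leq_trans k0 Hn.
case/hasP => p pR /hasP [x xp /eqP ext].
have [vs [j0 [_ Ho]]] := i_prod I (i_rget I Hc pR xp).
rewrite ext in Ho.
suff -> : v = vs by [].
case: Hcode => _ _ H3; apply: (H3 vs (elems R t) v) => //.
apply/allP => e /flattenP [s' /mapP [p' p'R ->] /mapP [y]]; rewrite mem_filter => /andP [/eqP ety yp] ->.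
have [vy [jy [ey Hy]]] := i_prod I (i_rget I Hc p'R yp).
rewrite ety in Hy; rewrite (i_uniq I Hy Ho) in ey.
by apply/existsP; exists jy; rewrite ey.
Qed.

Lemma init_inv : Inv (init enc v0) (origin [::]).
Proof.
have O0 : forall t v, origin [::] t v -> t = t0 /\ v = v0 by move=> t v [[-> ->]|[c [n []]]].
constructor => /=.
- move=> x /mapP [j _ ->]; exists v0, j; split => //; by left.
- by move=> t v1 v2 /O0 [_ ->] /O0 [_ ->].
- move=> j x; rewrite inE => /eqP ->; apply/mapP; exists j => //; by rewrite mem_enum.
- by move=> ? ? ? ? [].
- by move=> ? ? ? ? [].
- by move=> ? ? ? ? ? [].
- by move=> ? ? ? ? ? [].
- by move=> ? ? [].
- by move=> ? ? [].
- move=> c; rewrite /CInv /=; exists (take qs (enum node)); split.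
  + by rewrite take_uniq // enum_uniq.
  + rewrite size_takel // -cardT; have := kpos; rewrite /qsize; lia.
  + move=> j _ _ z v /O0 [ez _]; exists (t0, enc v0 j, None); first by rewrite inE.
    by rewrite /etag /= -ez; apply: tle_refl.
Qed.



Lemma step_inv s tr evs s' : Inv s (origin tr) -> step enc dec k delta Byz s evs s' ->
  Inv s' (origin (tr ++ evs)).
Proof.
move=> I0 Hst; move: I0; case: Hst.
- move=> {}s c v n H1 -> I; rewrite origin_eq1 //; constructor => /=.
  + apply: (i_prod I).
  + apply: (i_uniq I).
  + apply: (i_lists I).
  + move=> j c' n' x /In_cat [h|h]. exact (i_put I h). by case: (query_msgsP h).
  + apply: (i_tagrep I).
  + apply: (i_datrep I).
  + move=> c' n' R p x; rewrite /upd; case: eqP => _; [by case | apply: (i_rget I)].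
  + move=> j m /In_cat [h|/query_msgsP -> /=]; last by rewrite /upd eqxx.
    exact: leq_trans (i_freshN I h) (upd_cnt _ _ _).
  + move=> j m h; exact: leq_trans (i_freshC I h) (upd_cnt _ _ _).
  + move=> c'; case: (eqVneq c' c) => [->|ne].
      rewrite /CInv /= /upd eqxx; have := i_cl I c; rewrite /CInv H1 => -[Q HQ].
      exists Q; split => //.
      by move=> j r h; have := i_freshC I h; rewrite /= ltnn.
    apply: (CInv_mono (i_cl I c')).
    * by rewrite /= /upd (negbTE ne).
    * exact: lmono_refl.
    * by [].
    * by move=> *; left.
    * by move=> *; left.
    * by move=> n' j x /In_cat [h|h] //; case: (query_msgsP h).
- move=> {}s c n v R t n' H1 H2 H3 H4 -> I.
  set tw := (t.1.+1, c).
  have := i_cl I c; rewrite /CInv H1 => -[Q [[uQ sQ HQ] uR HR Hp]].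
  have [j [jR jQ jB]] := quorum_inter uR uQ (etrans (size_map _ _) H2) sQ.
  case/mapP: jR => [[j' r]] jr /= ej; subst j'.
  have [x ex gx] := HR j r jr jQ jB.
  have xt : tag_le (etag x) t.
    apply: H4; apply/mapP; exists x => //; rewrite mem_pmap; apply/mapP.
    by exists (j, r) => //=; rewrite ex.
  have Ht : forall z v', origin tr (z, c) v' -> tag_le (z, c) t.
    by move=> z v' h; apply: tle_trans (gx z v' h) xt.
  have Hfresh : forall v', ~ origin tr tw v'.
    by move=> v' /Ht; rewrite /tw /tag_le /tag_lt; case: (t) => a b0 /=; rewrite xpair_eqE; lia.
  have Htw : tag_le t tw by rewrite /tag_le /tag_lt ltnSn orbT.
  have He : forall c0 n0 t1 v1, RespGetTag V c n t <> InvPutData c0 n0 t1 v1 by move=> *; discriminate.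
  have Onew := origin_new (c := c) (n := cnt s c) (tw := tw) (v := v) (tr := tr) He.
  have Onew' : origin (tr ++ [:: RespGetTag V c n t; InvPutData c (cnt s c) tw v]) tw v.
    by right; exists c, (cnt s c); apply/In_cat; right; right; left.
  constructor => /=.
  + move=> x0; rewrite mem_cat => /orP [h|h].
      have [v1 [j1 [e1 o1]]] := i_prod I h; exists v1, j1; split => //; exact: origin_mono.
    by have [j1 ->] := put_sigsP h; exists v, j1.
  + move=> t' v1 v2 /Onew [o1|[e1 e2]] /Onew [o2|[e3 e4]].
    * exact: (i_uniq I o1 o2).
    * by rewrite e3 in o1; case: (Hfresh _ o1).
    * by rewrite e1 in o2; case: (Hfresh _ o2).
    * by rewrite e2 e4.
  + by move=> j0 x0 h; rewrite mem_cat (i_lists I h).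
  + move=> j0 c0 n0 x0 /In_cat [h|h]; rewrite mem_cat; first by rewrite (i_put I h).
    by case: (put_msgsP h) => _ _ ->; rewrite mem_put_sigs orbT.
  + by move=> j0 c0 n0 x0 h; rewrite mem_cat (i_tagrep I h).
  + by move=> j0 c0 n0 L x0 h xL; rewrite mem_cat (i_datrep I h xL).
  + move=> c0 n0 R0 p x0; rewrite /upd; case: eqP => _; first by case.
    by move=> h pR xp; rewrite mem_cat (i_rget I h pR xp).
  + move=> j0 m /In_cat [h|h]; first exact: leq_trans (i_freshN I h) (upd_cnt _ _ _).
    by rewrite (put_msgsP h) /= /upd eqxx.
  + by move=> j0 m h; apply: leq_trans (i_freshC I h) (upd_cnt _ _ _).
  + move=> c'; case: (eqVneq c' c) => [->|ne].
      rewrite /CInv /= /upd eqxx; exists tw; split => //.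
      * move=> z v' /Onew [o|[e _]]; first exact: tle_trans (Ht _ _ o) Htw.
        by rewrite e; apply: tle_refl.
      * by move=> j0 h; have := i_freshC I h; rewrite /= ltnn.
      * move=> j0 x0 /In_cat [h|h]; first by have := i_freshN I h; rewrite /= ltnn.
        by case: (put_msgsP h) => ->.
    apply: (CInv_mono (i_cl I c')).
    * by rewrite /= /upd (negbTE ne).
    * exact: lmono_refl.
    * move=> z v' /Onew [//|[e _]]; case: e => _ e; by move: ne; rewrite e eqxx.
    * by move=> *; left.
    * by move=> *; left.
    * move=> n0 j0 x0 /In_cat [h|h] //; case: (put_msgsP h) => e _ _.
      by move: ne; rewrite e eqxx.
- move=> {}s c n H1 -> I; rewrite origin_eq1 //; constructor => /=.
  + apply: (i_prod I).
  + apply: (i_uniq I).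
  + apply: (i_lists I).
  + move=> j c' n' x /In_cat [h|h]. exact (i_put I h). by case: (query_msgsP h).
  + apply: (i_tagrep I).
  + apply: (i_datrep I).
  + move=> c' n' R p x; rewrite /upd; case: eqP => _; last by apply: (i_rget I).
    by case=> _ <-.
  + move=> j m /In_cat [h|/query_msgsP -> /=]; last by rewrite /upd eqxx.
    exact: leq_trans (i_freshN I h) (upd_cnt _ _ _).
  + move=> j m h; exact: leq_trans (i_freshC I h) (upd_cnt _ _ _).
  + move=> c'; case: (eqVneq c' c) => [->|ne].
      rewrite /CInv /= /upd eqxx; have := i_cl I c; rewrite /CInv H1.
      by case=> Q HQ; exists Q; exact HQ.
    apply: (CInv_mono (i_cl I c')).
    * by rewrite /= /upd (negbTE ne).
    * exact: lmono_refl.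
    * by [].
    * by move=> *; left.
    * by move=> *; left.
    * by move=> n' j x /In_cat [h|h] //; case: (query_msgsP h).
- move=> {}s c n R t v n' H1 H2 H3 H4 H5 -> I.
  have Ho := getdata_ok I H1 H3 H5.
  have He : forall c0 n0 t1 v1, RespGetData c n t v <> InvPutData c0 n0 t1 v1 by move=> *; discriminate.
  rewrite (origin_eq2 _ _ He Ho).
  constructor => /=.
  + move=> x0; rewrite mem_cat => /orP [h|h]; first exact: (i_prod I h).
    by have [j1 ->] := put_sigsP h; exists v, j1.
  + apply: (i_uniq I).
  + by move=> j0 x0 h; rewrite mem_cat (i_lists I h).
  + move=> j0 c0 n0 x0 /In_cat [h|h]; rewrite mem_cat; first by rewrite (i_put I h).
    by case: (put_msgsP h) => _ _ ->; rewrite mem_put_sigs orbT.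
  + by move=> j0 c0 n0 x0 h; rewrite mem_cat (i_tagrep I h).
  + by move=> j0 c0 n0 L x0 h xL; rewrite mem_cat (i_datrep I h xL).
  + move=> c0 n0 R0 p x0; rewrite /upd; case: eqP => _; first by case.
    by move=> h pR xp; rewrite mem_cat (i_rget I h pR xp).
  + move=> j0 m /In_cat [h|h]; first exact: leq_trans (i_freshN I h) (upd_cnt _ _ _).
    by rewrite (put_msgsP h) /= /upd eqxx.
  + by move=> j0 m h; apply: leq_trans (i_freshC I h) (upd_cnt _ _ _).
  + move=> c'; case: (eqVneq c' c) => [->|ne].
      rewrite /CInv /= /upd eqxx; have := i_cl I c; rewrite /CInv H1.
      by case=> Q HQ; exists Q; exact HQ.
    apply: (CInv_mono (i_cl I c')).
    * by rewrite /= /upd (negbTE ne).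
    * exact: lmono_refl.
    * by [].
    * by move=> *; left.
    * by move=> *; left.
    * move=> n0 j0 x0 /In_cat [h|h] //; case: (put_msgsP h) => e _ _.
      by move: ne; rewrite e eqxx.
- move=> {}s c n A H1 H2 I.
  have He : forall c0 n0 t1 v1, RespPutData V c n <> InvPutData c0 n0 t1 v1 by move=> *; discriminate.
  rewrite (origin_eq1 _ He); constructor => /=.
  + apply: (i_prod I).
  + apply: (i_uniq I).
  + apply: (i_lists I).
  + apply: (i_put I).
  + apply: (i_tagrep I).
  + apply: (i_datrep I).
  + move=> c' n' R p x; rewrite /upd; case: eqP => _; last by apply: (i_rget I).
    by [].
  + apply: (i_freshN I).
  + apply: (i_freshC I).
  + move=> c'; case: (eqVneq c' c) => [->|ne].
      rewrite /CInv /= /upd eqxx; have := i_cl I c; rewrite /CInv.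
      case: H1 => ->; last by [].
      by case=> tw [_ uA HA _ _]; exists A; split.
    apply: (CInv_mono (i_cl I c')).
    * by rewrite /= /upd (negbTE ne).
    * exact: lmono_refl.
    * by [].
    * by move=> *; left.
    * by move=> *; left.
    * by [].
- move=> {}s c j m l1 l2 cs' H1 H2 H3 I; rewrite cats0.
  have Hsub : forall x, List.In x (l1 ++ l2) -> List.In x (toClient s) by move=> x h; rewrite H1; apply: In_del.
  have Hjm : List.In (j, m) (toClient s) by rewrite H1; apply/In_cat; right; left.
  constructor => /=.
  + apply: (i_prod I).
  + apply: (i_uniq I).
  + apply: (i_lists I).
  + apply: (i_put I).
  + move=> j0 c0 n0 x0 /Hsub; apply: (i_tagrep I).
  + move=> j0 c0 n0 L x0 /Hsub; apply: (i_datrep I).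
  + move=> c0 n0 R0 p x0; rewrite /upd; case: eqP => [_|_]; last by apply: (i_rget I).
    move=> e; rewrite e in H3.
    case/recvP: H3 => [[? [? [? [? [? [_ _ _ e4]]]]]]|[[n1 [R1 [c1 [L [e1 e2 _ e4]]]]]|[[? [? [? [_ _ _ e4]]]]|[? [? [? [_ _ _ e4]]]]]]]; try discriminate.
    case: e4 => _ ->; rewrite mem_rcons inE => /orP [/eqP -> /= xL | pR1 xp].
      by rewrite e2 in Hjm; exact (i_datrep I Hjm xL).
    exact (i_rget I e1 pR1 xp).
  + apply: (i_freshN I).
  + move=> j0 m0 /Hsub; apply: (i_freshC I).
  + move=> c'; case: (eqVneq c' c) => [->|ne].
      apply: (recv_cinv (i_cl I c) H2 H3) => //=.
      by rewrite /upd eqxx.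
    apply: (CInv_mono (i_cl I c')).
    * by rewrite /= /upd (negbTE ne).
    * exact: lmono_refl.
    * by [].
    * by move=> n0 j0 r /Hsub; left.
    * by move=> n0 j0 /Hsub; left.
    * by [].
- move=> {}s c j m cs' H0 H1 H2 H3 I; rewrite cats0.
  constructor => /=.
  + apply: (i_prod I).
  + apply: (i_uniq I).
  + apply: (i_lists I).
  + apply: (i_put I).
  + apply: (i_tagrep I).
  + apply: (i_datrep I).
  + move=> c0 n0 R0 p x0; rewrite /upd; case: eqP => [_|_]; last by apply: (i_rget I).
    move=> e; rewrite e in H3.
    case/recvP: H3 => [[? [? [? [? [? [_ _ _ e4]]]]]]|[[n1 [R1 [c1 [L [e1 e2 _ e4]]]]]|[[? [? [? [_ _ _ e4]]]]|[? [? [? [_ _ _ e4]]]]]]]; try discriminate.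
    case: e4 => _ ->; rewrite mem_rcons inE => /orP [/eqP -> /= xL | pR1 xp].
      by move: H1; rewrite e2 /= => /allP; apply.
    exact (i_rget I e1 pR1 xp).
  + apply: (i_freshN I).
  + apply: (i_freshC I).
  + move=> c'; case: (eqVneq c' c) => [->|ne].
      apply: (recv_cinv (i_cl I c) H2 H3) => //=.
      * by rewrite /upd eqxx.
      * by rewrite H0.
    apply: (CInv_mono (i_cl I c')).
    * by rewrite /= /upd (negbTE ne).
    * exact: lmono_refl.
    * by [].
    * by move=> *; left.
    * by move=> *; left.
    * by [].
- move=> {}s j m l1 l2 L' out H0 H1 H2 I; rewrite cats0.
  have Hsub : forall x, List.In x (l1 ++ l2) -> List.In x (toNode s) by move=> x h; rewrite H1; apply: In_del.
  have Hjm : List.In (j, m) (toNode s) by rewrite H1; apply/In_cat; right; left.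
  move: Hjm; case: H2 => [c n x xL xmax | c n | c n x] Hjm.
  + constructor => /=.
    * apply: (i_prod I).
    * apply: (i_uniq I).
    * move=> j0 x0; rewrite /updn; case: eqP => [e|_]; [subst j0|]; apply: (i_lists I).
    * move=> j0 c0 n0 x0 /Hsub; apply: (i_put I).
    * move=> j0 c0 n0 x0 /In_cat [h|[h|//]]; first exact (i_tagrep I h).
      by case: h => _ _ _ <-; apply: (i_lists I xL).
    * move=> j0 c0 n0 L x0 /In_cat [h|[h|//]]; first exact (i_datrep I h).
      by [].
    * apply: (i_rget I).
    * move=> j0 m0 /Hsub; apply: (i_freshN I).
    * move=> j0 m0 /In_cat [h|[h|//]]; first exact (i_freshC I h).
      by case: h => _ <-; exact (i_freshN I Hjm).
    * move=> c0; apply: (CInv_mono (i_cl I c0)) => //.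
      - move=> j0 y h; rewrite /= /updn; case: eqP => [e|_]; [subst j0|]; exists y => //; apply: tle_refl.
      - move=> n0 j0 r /In_cat [h|[h|//]]; first by left.
        by right; case: h => <- _ _ <-; exists x => //; exact: xmax.
      - by move=> n0 j0 /In_cat [h|[h|//]]; left.
      - by move=> n0 j0 x0 /Hsub.
  + constructor => /=.
    * apply: (i_prod I).
    * apply: (i_uniq I).
    * move=> j0 x0; rewrite /updn; case: eqP => [e|_]; [subst j0|]; apply: (i_lists I).
    * move=> j0 c0 n0 x0 /Hsub; apply: (i_put I).
    * move=> j0 c0 n0 x0 /In_cat [h|[h|//]]; first exact (i_tagrep I h).
      by [].
    * move=> j0 c0 n0 L x0 /In_cat [h|[h|//]]; first exact (i_datrep I h).
      by case: h => _ _ _ <-; apply: (i_lists I).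
    * apply: (i_rget I).
    * move=> j0 m0 /Hsub; apply: (i_freshN I).
    * move=> j0 m0 /In_cat [h|[h|//]]; first exact (i_freshC I h).
      by case: h => _ <-; exact (i_freshN I Hjm).
    * move=> c0; apply: (CInv_mono (i_cl I c0)) => //.
      - move=> j0 y h; rewrite /= /updn; case: eqP => [e|_]; [subst j0|]; exists y => //; apply: tle_refl.
      - by move=> n0 j0 r /In_cat [h|[h|//]]; left.
      - by move=> n0 j0 /In_cat [h|[h|//]]; left.
      - by move=> n0 j0 x0 /Hsub.
  + have xP := i_put I Hjm.
    constructor => /=.
    * apply: (i_prod I).
    * apply: (i_uniq I).
    * move=> j0 x0; rewrite /updn; case: eqP => [e|_]; [subst j0|]; last by apply: (i_lists I).
      move/ins_sub; rewrite inE => /orP [/eqP ->|h] //; exact (i_lists I h).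
    * move=> j0 c0 n0 x0 /Hsub; apply: (i_put I).
    * move=> j0 c0 n0 x0 /In_cat [h|[h|//]]; first exact (i_tagrep I h).
      by [].
    * move=> j0 c0 n0 L x0 /In_cat [h|[h|//]]; first exact (i_datrep I h).
      by [].
    * apply: (i_rget I).
    * move=> j0 m0 /Hsub; apply: (i_freshN I).
    * move=> j0 m0 /In_cat [h|[h|//]]; first exact (i_freshC I h).
      by case: h => _ <-; exact (i_freshN I Hjm).
    * move=> c0; apply: (CInv_mono (i_cl I c0)) => //.
      - move=> j0 y h; rewrite /= /updn; case: eqP => [e|_]; [subst j0|]; last by exists y => //; apply: tle_refl.
        by apply: ins_mono; rewrite inE h orbT.
      - by move=> n0 j0 r /In_cat [h|[h|//]]; left.
      - move=> n0 j0 /In_cat [h|[h|//]]; first by left.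
        right; case: h => <- <- <-; exists x; split => //.
        by rewrite /= /updn eqxx; apply: ins_mono; rewrite inE eqxx.
      - by move=> n0 j0 x0 /Hsub.
- move=> {}s j j' x H0 H1 H2 I; rewrite cats0.
  constructor => /=.
  + apply: (i_prod I).
  + apply: (i_uniq I).
  + move=> j0 x0; rewrite /updn; case: eqP => [e|_]; [subst j0|]; last by apply: (i_lists I).
    move/ins_sub; rewrite inE => /orP [/eqP ->|h] //; exact (i_lists I h).
  + apply: (i_put I).
  + apply: (i_tagrep I).
  + apply: (i_datrep I).
  + apply: (i_rget I).
  + apply: (i_freshN I).
  + apply: (i_freshC I).
  + move=> c0; apply: (CInv_mono (i_cl I c0)) => //.
    * move=> j0 y h; rewrite /= /updn; case: eqP => [e|_]; [subst j0|]; last by exists y => //; apply: tle_refl.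
      by apply: ins_mono; rewrite inE h orbT.
    * by move=> *; left.
    * by move=> *; left.
Qed.



Lemma reach_inv s tr : reach enc dec k delta v0 Byz s tr ->
  Inv s (origin tr) /\
  forall pre post c n t v, tr = pre ++ RespGetData c n t v :: post -> origin pre t v.
Proof.
elim => [|{}s {}tr evs s' Hr [I G] Hst].
  by split; [exact: init_inv | move=> [|? ?]].
split; first exact: step_inv I Hst.
move=> pre post c n t v e.
case: (split_app e) => [[p ep]|[e1 [eevs ->]]]; first exact: G ep.
apply: origin_mono.
have Hin : List.In (RespGetData c n t v) evs by rewrite eevs; apply/In_cat; right; left.
move: I Hin; case: Hst => /=.
- by move=> *; intuition discriminate.
- by move=> *; intuition discriminate.
- by move=> *; intuition discriminate.
- move=> s0 c0 n0 R t1 v1 n1 H1 _ H3 _ H5 _ I [h|[h|//]]; last discriminate.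
  case: h => _ _ <- <-; exact: getdata_ok I H1 H3 H5.
- by move=> *; intuition discriminate.
- by [].
- by [].
- by [].
- by [].
Qed.

End P.

Theorem mainTheorem5 (node : finType) (V E : eqType)
  (enc : V -> node -> E) (dec : seq E -> option V)
  (k delta b : nat) (v0 : V) (Byz : {set node}) :
  rlnc_code enc dec k -> 1 <= delta ->
  #|Byz| <= b -> 3 * b < #|node| - k ->
  forall (s : gstate node V E) (tr : seq (event V)),
  reach enc dec k delta v0 Byz s tr ->
  forall pre post (c n : nat) (t : tag) (v : V),
  tr = pre ++ RespGetData c n t v :: post ->
  (t, v) = (t0, v0) \/
  exists pre1 pre2 (c' n' : nat), pre = pre1 ++ InvPutData c' n' t v :: pre2.
Proof.
move=> Hcode Hd HB Hb s tr Hr pre post c n t v e.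
have [_ G] := reach_inv Hcode Hd HB Hb Hr.
case: (G _ _ _ _ _ _ e) => [h|[c' [n' h]]]; first by left.
right; have [l1 [l2 ->]] := In_split' h; by exists l1, l2, c', n'.
Qed.
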